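(* Let $A,B$ be $2n\times2n$ real symmetric positive definite matrices such that $AJB=BJA$ and $AB=BA$. Then $A^sJB^s=B^sJA^s$ for every $s\in\mathbb{R}$.
   Context: $J:=I_n\otimes\begin{pmatrix}0&1\\-1&0\end{pmatrix}$, where $I_n$ is the $n\times n$ identity matrix and $\otimes$ is the Kronecker product. For a real symmetric positive definite matrix $A$ and $s\in\mathbb{R}$, $A^s$ denotes the real symmetric positive definite matrix obtained by raising the eigenvalues of $A$ to the power $s$ in its spectral decomposition. *)

(* Defs.v *)
From HB Require Import structures.
From mathcomp Require Import all_boot all_order all_algebra.
From mathcomp Require Import all_classical all_reals all_analysis.
From mathcomp Require Import mxtens.
Set Implicit Arguments. Unset Strict Implicit. Unset Printing Implicit Defensive.
Import Order.TTheory GRing.Theory Num.Theory.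
Local Open Scope ring_scope.
Local Open Scope classical_set_scope.

Definition J2 {R : realType} : 'M[R]_2 :=
  \matrix_(i < 2, j < 2)
    (if (val i == 0%N) && (val j == 1%N) then 1
     else if (val i == 1%N) && (val j == 0%N) then -1 else 0).

Definition Jmx {R : realType} (n : nat) : 'M[R]_(n * 2) :=
  tensmx (1%:M : 'M[R]_n) J2.

Definition sym_pd {R : realType} {m : nat} (A : 'M[R]_m) : Prop :=
  A^T = A /\ (forall v : 'cV[R]_m, v != 0 -> 0 < (v^T *m A *m v) 0 0).

Definition spectral_decomp {R : realType} {m : nat} (A : 'M[R]_m)
  (p : 'M[R]_m * 'rV[R]_m) : Prop :=
  p.1^T *m p.1 = 1%:M /\ (forall i, 0 < p.2 0 i) /\
  A = p.1^T *m diag_mx p.2 *m p.1.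

(* A^s : raise the eigenvalues in (a chosen) spectral decomposition to the
   power s.  For SPD A such a decomposition exists, and the result does not
   depend on the choice. *)
Definition mxpowR {R : realType} {m : nat} (A : 'M[R]_m) (s : R) : 'M[R]_m :=
  let p := xget (0, 0) (spectral_decomp A) in
  p.1^T *m diag_mx (\row_i (p.2 0 i `^ s)) *m p.1.

(* Main.v *)
Require Import Defs.
From HB Require Import structures.
From mathcomp Require Import all_boot all_order all_algebra.
From mathcomp Require Import all_classical all_reals all_analysis.
From mathcomp Require Import mxtens.
Import Order.TTheory GRing.Theory Num.Theory.
Local Open Scope ring_scope.

Definition MF (R : realType) (m : nat) (U : 'M[R]_m) (d : 'rV[R]_m) (f : R -> R) :=
  U^T *m diag_mx (\row_i f (d 0 i)) *m U.
Arguments MF {R m}.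

Lemma MF_ext (R : realType) m (U : 'M[R]_m) (d : 'rV[R]_m) (f g : R -> R) :
  (forall i, f (d 0 i) = g (d 0 i)) -> MF U d f = MF U d g.
Proof.
move=> H; rewrite /MF; congr (_ *m diag_mx _ *m _).
by apply/rowP=> i; rewrite !mxE H.
Qed.

Lemma MF_mul (R : realType) m (U : 'M[R]_m) (d : 'rV[R]_m) (f g : R -> R) :
  U^T *m U = 1%:M -> MF U d f *m MF U d g = MF U d (fun x => f x * g x).
Proof.
move=> UU; have UU' := mulmx1C UU.
rewrite /MF !mulmxA -(mulmxA _ U) UU' mulmx1 -(mulmxA U^T) mulmx_diag.
by congr (_ *m diag_mx _ *m _); apply/rowP=> i; rewrite !mxE.
Qed.

Lemma MF_sum (R : realType) m (U : 'M[R]_m) (d : 'rV[R]_m) (I : finType) (F : I -> R -> R) :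
  \sum_i MF U d (F i) = MF U d (fun x => \sum_i F i x).
Proof.
rewrite /MF -mulmx_suml -mulmx_sumr -linear_sum.
by congr (_ *m diag_mx _ *m _); apply/rowP=> j; rewrite summxE !mxE; apply: eq_bigr=> i _; rewrite mxE.
Qed.

Lemma MF_scale (R : realType) m (U : 'M[R]_m) (d : 'rV[R]_m) a (f : R -> R) :
  a *: MF U d f = MF U d (fun x => a * f x).
Proof.
rewrite /MF scalemxAl scalemxAr -linearZ.
by congr (_ *m diag_mx _ *m _); apply/rowP=> j; rewrite !mxE.
Qed.

Lemma MF_one (R : realType) m (U : 'M[R]_m) (d : 'rV[R]_m) :
  U^T *m U = 1%:M -> MF U d (fun _ => 1) = 1%:M.
Proof.
move=> UU; rewrite /MF.
have -> : diag_mx (\row_i (fun _ : R => (1:R)) (d 0 i)) = 1%:M :> 'M[R]_m.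
  by rewrite -diag_const_mx; congr diag_mx; apply/rowP=> i; rewrite !mxE.
by rewrite mulmx1.
Qed.

Lemma MF_id (R : realType) m (U : 'M[R]_m) (d : 'rV[R]_m) :
  MF U d id = U^T *m diag_mx d *m U.
Proof. by rewrite /MF; congr (_ *m diag_mx _ *m _); apply/rowP=> i; rewrite !mxE. Qed.

Lemma diag_comm (R : realType) m (d : 'rV[R]_m) (f : R -> R) (Z : 'M[R]_m) :
  diag_mx d *m Z = Z *m diag_mx d ->
  diag_mx (\row_i f (d 0 i)) *m Z = Z *m diag_mx (\row_i f (d 0 i)).
Proof.
move=> HZ; rewrite mul_diag_mx mul_mx_diag; move: HZ; rewrite mul_diag_mx mul_mx_diag => HZ; apply/matrixP=> i j; move/matrixP: HZ => /(_ i j).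
rewrite !mxE => e.
have [->|nz] := eqVneq (Z i j) 0; first by rewrite mulr0 mul0r.
have : d 0 i = d 0 j.
  by apply: (mulIf nz); rewrite e mulrC.
by move=> ->; rewrite mulrC.
Qed.

Lemma MF_comm (R : realType) m (U : 'M[R]_m) (d : 'rV[R]_m) (f : R -> R) (X : 'M[R]_m) :
  U^T *m U = 1%:M -> MF U d id *m X = X *m MF U d id ->
  MF U d f *m X = X *m MF U d f.
Proof.
move=> UU; have UU' := mulmx1C UU; rewrite MF_id /MF => H.
set Z := U *m X *m U^T.
have HZ : diag_mx d *m Z = Z *m diag_mx d.
  have := congr1 (fun M => U *m M *m U^T) H.
  by rewrite /Z !mulmxA UU' mul1mx -!mulmxA UU' mulmx1 !mulmxA.
have HZ2 := @diag_comm _ _ d f _ HZ.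
have E1 : U *m X = Z *m U by rewrite /Z -mulmxA UU mulmx1.
have E2 : U^T *m Z = X *m U^T by rewrite /Z !mulmxA UU mul1mx.
clearbody Z; by rewrite -[U^T *m _ *m U *m X]mulmxA E1 mulmxA -(mulmxA U^T) HZ2 mulmxA E2 -!mulmxA.
Qed.

Definition cnt (R : realType) m (d : 'rV[R]_m) (i : 'I_m) : R :=
  (#|[pred k | d 0 k == d 0 i]|)%:R.
Arguments cnt {R m}.
Definition prj (R : realType) m (U : 'M[R]_m) (d : 'rV[R]_m) (i : 'I_m) :=
  MF U d (fun x => if x == d 0 i then (cnt d i)^-1 else 0).
Arguments prj {R m}.

Lemma sum_proj (R : realType) m (d : 'rV[R]_m) (F : R -> R) j :
  \sum_i F (d 0 i) * (if d 0 j == d 0 i then (cnt d i)^-1 else 0) = F (d 0 j).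
Proof.
rewrite (eq_bigr (fun i => if d 0 i == d 0 j then F (d 0 j) * (cnt d j)^-1 else 0)); last first.
  move=> i _; rewrite eq_sym; case: eqP => [e|_]; last by rewrite mulr0.
  by rewrite /cnt e.
rewrite -big_mkcond sumr_const /cnt.
have -> : #|(fun i : 'I_m => d 0 i == d 0 j)| = #|[pred k | d 0 k == d 0 j]| by apply: eq_card.
rewrite -(mulr_natr (F (d 0 j) / _)) divfK //.
rewrite pnatr_eq0 -lt0n; apply/card_gt0P; exists j; by rewrite inE.
Qed.

Lemma MF_decomp (R : realType) m (U : 'M[R]_m) (d : 'rV[R]_m) (f : R -> R) :
  MF U d f = \sum_i f (d 0 i) *: prj U d i.
Proof.
rewrite /prj; under eq_bigr do rewrite MF_scale.
rewrite MF_sum; apply: MF_ext => j; by rewrite sum_proj.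
Qed.
Arguments MF_decomp {R m}.

Lemma MF_prod (R : realType) m (U V : 'M[R]_m) (d e : 'rV[R]_m) (f g : R -> R) :
  MF U d f *m MF V e g =
  \sum_i \sum_j (f (d 0 i) * g (e 0 j)) *: (prj U d i *m prj V e j).
Proof.
rewrite (MF_decomp U d f) (MF_decomp V e g) mulmx_suml; apply: eq_bigr => i _.
rewrite mulmx_sumr; apply: eq_bigr => j _.
by rewrite -scalemxAl -scalemxAr scalerA.
Qed.

Lemma sandwich (R : realType) m (I : finType) (F G : I -> I -> 'M[R]_m) X :
  (\sum_i \sum_j F i j) *m X *m (\sum_k \sum_l G k l) =
  \sum_i \sum_j \sum_k \sum_l (F i j *m X *m G k l).
Proof.
rewrite mulmx_suml mulmx_suml; apply: eq_bigr => i _.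
rewrite mulmx_suml mulmx_suml; apply: eq_bigr => j _.
rewrite mulmx_sumr; apply: eq_bigr => k _.
rewrite mulmx_sumr; apply: eq_bigr => l _. by [].
Qed.

Lemma prj_eig (R : realType) m (U : 'M[R]_m) (d : 'rV[R]_m) i :
  U^T *m U = 1%:M ->
  prj U d i *m MF U d id = d 0 i *: prj U d i /\
  MF U d id *m prj U d i = d 0 i *: prj U d i.
Proof.
move=> UU; rewrite /prj !MF_mul // !MF_scale; split; apply: MF_ext => j /=;
  by case: eqP => [->|_]; rewrite ?mulr0 ?mul0r // mulrC.
Qed.
Arguments prj_eig {R m}.

Lemma main_lem (R : realType) m (A B X U V : 'M[R]_m) (d e : 'rV[R]_m) (s : R) :
  U^T *m U = 1%:M -> V^T *m V = 1%:M ->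
  (forall i, 0 < d 0 i) -> (forall i, 0 < e 0 i) ->
  A = U^T *m diag_mx d *m U -> B = V^T *m diag_mx e *m V ->
  A *m X *m B = B *m X *m A -> A *m B = B *m A ->
  MF U d (fun x => x `^ s) *m X *m MF V e (fun x => x `^ s) =
  MF V e (fun x => x `^ s) *m X *m MF U d (fun x => x `^ s).
Proof.
move=> UU VV dp ep HA HB HX HAB.
rewrite -MF_id in HA; rewrite -MF_id in HB.
set P := prj U d; set Q := prj V e.
have PA i : P i *m A = d 0 i *: P i by rewrite HA; case: (prj_eig U d i UU).
have AP i : A *m P i = d 0 i *: P i by rewrite HA; case: (prj_eig U d i UU).
have QB i : Q i *m B = e 0 i *: Q i by rewrite HB; case: (prj_eig V e i VV).
have BQ i : B *m Q i = e 0 i *: Q i by rewrite HB; case: (prj_eig V e i VV).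
have PB i : P i *m B = B *m P i.
  by apply: MF_comm => //; rewrite -HA.
have QA j : Q j *m A = A *m Q j.
  by apply: MF_comm => //; rewrite -HB HAB.
have QP i j : Q j *m P i = P i *m Q j.
  by apply: MF_comm => //; rewrite -HB PB.
have key i j k l : (d 0 i * e 0 l) *: (P i *m Q j *m X *m (P k *m Q l)) =
                   (e 0 j * d 0 k) *: (P i *m Q j *m X *m (P k *m Q l)).
  have E1 : P i *m Q j *m A = d 0 i *: (P i *m Q j).
    by rewrite -mulmxA QA mulmxA PA scalemxAl.
  have E2 : P i *m Q j *m B = e 0 j *: (P i *m Q j).
    by rewrite -mulmxA QB -scalemxAr.
  have E3 : A *m (P k *m Q l) = d 0 k *: (P k *m Q l).
    by rewrite mulmxA AP scalemxAl.
  have E4 : B *m (P k *m Q l) = e 0 l *: (P k *m Q l).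
    by rewrite mulmxA -PB -mulmxA BQ -scalemxAr.
  move: E1 E2 E3 E4; move: (P i *m Q j) (P k *m Q l) => L Rr E1 E2 E3 E4.
  have := congr1 (fun M => L *m M *m Rr) HX.
  rewrite /= !mulmxA E1 E2 -!(mulmxA _ _ Rr) E3 E4.
  rewrite -!scalemxAl -!scalemxAr !scalerA !mulmxA; exact.
have key2 i j k l : (d 0 i `^ s * e 0 l `^ s) *: (P i *m Q j *m X *m (P k *m Q l)) =
                   (e 0 j `^ s * d 0 k `^ s) *: (P i *m Q j *m X *m (P k *m Q l)).
  have [->|nz] := eqVneq (P i *m Q j *m X *m (P k *m Q l)) 0; first by rewrite !scaler0.
  have := key i j k l; move/eqP; rewrite -subr_eq0 -scalerBl scalemx_eq0 (negPf nz) orbF.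
  rewrite subr_eq0 => /eqP E.
  by rewrite -!powRM ?ltW // E.
have -> : MF U d (fun x => x `^ s) = MF U d (fun x => x `^ s) *m MF V e (fun _ => 1).
  by rewrite MF_one // mulmx1.
have -> : MF V e (fun x => x `^ s) = MF U d (fun _ => 1) *m MF V e (fun x => x `^ s).
  by rewrite MF_one // mul1mx.
rewrite !MF_prod !sandwich.
apply: eq_bigr => i _; apply: eq_bigr => j _; apply: eq_bigr => k _; apply: eq_bigr => l _.
rewrite -!scalemxAl -!scalemxAr !scalerA !mulr1 !mul1r -/P -/Q.
by rewrite key2 mulrC.
Qed.

Lemma xget_cases (R : realType) m (A : 'M[R]_m) :
  let p := xget (0, 0) (spectral_decomp A) in
  spectral_decomp A p \/ p = (0, 0).
Proof.
move=> p; case: (pselect (exists q, spectral_decomp A q)) => [ex|nex].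
  by left; apply: xgetPex.
right; rewrite /p xgetPN // => q hq; apply: nex; by exists q.
Qed.

Theorem mainTheorem8 (R : realType) (n : nat) (A B : 'M[R]_(n * 2)) :
  sym_pd A -> sym_pd B ->
  A *m Jmx n *m B = B *m Jmx n *m A ->
  A *m B = B *m A ->
  forall s : R,
    mxpowR A s *m Jmx n *m mxpowR B s = mxpowR B s *m Jmx n *m mxpowR A s.
Proof.
move=> _ _ HX HAB s; rewrite /mxpowR.
case: (xget_cases _ _ A); move: (xget _ _) => [U d]; last first.
  by case=> -> ->; rewrite /= trmx0 !mul0mx !mulmx0.
case=> /= UU [dp HA].
case: (xget_cases _ _ B); move: (xget _ _) => [V e]; last first.
  by case=> -> ->; rewrite /= trmx0 !mul0mx !mulmx0.
case=> /= VV [ep HB].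
exact: (main_lem _ _ _ _ _ _ _ _ _ s UU VV dp ep HA HB HX HAB).
Qed.
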